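(* The vector fields of the central system pairwise commute: for all $j,k\ge1$, $[X_j,X_k]=0$ on $\mathcal H$, i.e. for every $i\ge0$, $$\frac{\partial}{\partial t_j}\Big(\frac{\partial H^{(i)}}{\partial t_k}\Big)=\frac{\partial}{\partial t_k}\Big(\frac{\partial H^{(i)}}{\partial t_j}\Big),$$ where the derivative along $X_j$ of the components of $X_k$ (which are polynomials in the coordinates $H^a_l$) is computed by the chain rule.
   Context: Let $z$ be a formal variable and $\mathcal L$ the space of formal Laurent series $\sum_{j\le N} l_j z^j$ (finitely many positive powers of $z$). Let $\mathcal H$ be the set of sequences $H=(H^{(k)})_{k\ge0}$ of elements of $\mathcal L$ with $H^{(0)}=1$ and, for $k\ge1$, $H^{(k)}=z^k+\sum_{l\ge1}H^k_l z^{-l}$; the coefficients $H^k_l$ are coordinates on $\mathcal H$, and we set $H^0_l=0$. The central system (CS) is the family of vector fields $X_j$, $j\ge1$, on $\mathcal H$, with associated times $t_j$, defined by $$\frac{\partial H^{(k)}}{\partial t_j}=H^{(j+k)}-H^{(j)}H^{(k)}+\sum_{l=1}^{k}H^j_lH^{(k-l)}+\sum_{l=1}^{j}H^k_lH^{(j-l)},\qquad k\ge0;$$ the right-hand side contains only negative powers of $z$, so this determines the components $X_j(H^k_l)$. *)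

(* Defs.v *)
From mathcomp Require Import all_boot all_algebra.
Set Implicit Arguments. Unset Strict Implicit. Unset Printing Implicit Defensive.
Import GRing.Theory Num.Theory.

(* Polynomial expressions (integer coefficients) in the coordinates
   H^a_l of the space \mathcal H; [EVar a l] stands for H^a_l (a, l >= 1). *)
Inductive cexpr : Type :=
  | EVar (a l : nat)
  | ECst (c : int)
  | EAdd (p q : cexpr)
  | EMul (p q : cexpr).

Definition ezero : cexpr := ECst 0%R.
Definition eone : cexpr := ECst 1%R.
Definition eneg (p : cexpr) : cexpr := EMul (ECst (-1)%R) p.
Definition esum (s : seq cexpr) : cexpr := foldr EAdd ezero s.

Fixpoint ceval (R : comPzRingType) (h : nat -> nat -> R) (p : cexpr) : R :=
  match p with
  | EVar a l => h a l
  | ECst c => c%:~R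
  | EAdd p q => (ceval h p + ceval h q)%R
  | EMul p q => (ceval h p * ceval h q)%R
  end.

(* derivative of a polynomial along the vector field with components V a l
   (= X(H^a_l)), computed by the chain rule (Leibniz rule on expressions) *)
Fixpoint cderiv (V : nat -> nat -> cexpr) (p : cexpr) : cexpr :=
  match p with
  | EVar a l => V a l
  | ECst _ => ezero
  | EAdd p q => EAdd (cderiv V p) (cderiv V q)
  | EMul p q => EAdd (EMul (cderiv V p) q) (EMul p (cderiv V q))
  end.

(* coordinate H^a_l, with the convention H^0_l = 0 *)
Definition Hcoord (a l : nat) : cexpr := if a == 0%N then ezero else EVar a l.

(* coefficient of z^n in H^(k):  H^(0) = 1,  H^(k) = z^k + sum_{l>=1} H^k_l z^-l *)
Definition coefL (k : nat) (n : int) : cexpr :=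
  if n == (k : int) then eone
  else if (n < 0)%R then Hcoord k (absz n) else ezero.

(* coefficient of z^n in H^(a) H^(b): sum over p + q = n, p <= a, q <= b
   (the only possibly nonzero terms), p = a - i for i = 0 .. a + b - n *)
Definition prodcoef (a b : nat) (n : int) : cexpr :=
  if (n <= (a : int) + (b : int))%R then
    esum [seq EMul (coefL a ((a : int) - Posz i)%R)
                   (coefL b (n - ((a : int) - Posz i))%R)
         | i <- iota 0 (absz ((a : int) + (b : int) - n)%R).+1]
  else ezero.

(* coefficient of z^n in
   H^(j+k) - H^(j) H^(k) + sum_{l=1}^k H^j_l H^(k-l) + sum_{l=1}^j H^k_l H^(j-l) *)
Definition cs_rhs (j k : nat) (n : int) : cexpr :=
  esum [:: coefL (j + k) n;
           eneg (prodcoef j k n);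
           esum [seq EMul (Hcoord j m) (coefL (k - m) n) | m <- iota 1 k];
           esum [seq EMul (Hcoord k m) (coefL (j - m) n) | m <- iota 1 j]].

(* component X_j(H^k_l): the coefficient of z^{-l} of dH^(k)/dt_j *)
Definition Xcomp (j k l : nat) : cexpr := cs_rhs j k (- (l : int))%R.

Definition Xfield (j : nat) : nat -> nat -> cexpr := fun a l => Xcomp j a l.

(* Main.v *)
Require Import Defs.
From HB Require Import structures.
From mathcomp Require Import all_boot all_algebra ring zify.
From Stdlib Require Import FunctionalExtensionality.
Set Implicit Arguments. Unset Strict Implicit. Unset Printing Implicit Defensive.
Import GRing.Theory Num.Theory.
Local Open Scope ring_scope.

Section Dual.
Variable R : comPzRingType.
Definition dual := (R * R)%type.
HB.instance Definition _ := GRing.Zmodule.on dual.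
Definition dmul (x y : dual) : dual := (x.1 * y.1, x.1 * y.2 + x.2 * y.1).
Definition done_ : dual := (1, 0).
Lemma dmulA : associative dmul.
Proof. by move=> [a b] [c d] [e f]; rewrite /dmul /done_ /=; congr pair; ring. Qed.
Lemma dmulC : commutative dmul.
Proof. by move=> [a b] [c d]; rewrite /dmul /done_ /=; congr pair; ring. Qed.
Lemma dmul1 : left_id done_ dmul.
Proof. by move=> [a b]; rewrite /dmul /done_ /=; congr pair; ring. Qed.
Lemma dmulD : left_distributive dmul +%R.
Proof. move=> [a b] [c d] [e f]; have ->: forall x y : dual, x + y = (x.1 + y.1, x.2 + y.2) by [].
rewrite /dmul /=; congr pair; rewrite /=; ring. Qed.
HB.instance Definition _ := GRing.Zmodule_isComPzRing.Build dual dmulA dmulC dmul1 dmulD.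
Lemma dual_mulE (x y : dual) : x * y = (x.1 * y.1, x.1 * y.2 + x.2 * y.1). Proof. by []. Qed.
End Dual.

Section Ser.
Variable A : comPzRingType.
Implicit Types F G H : nat -> A.

Definition cmul F G : nat -> A := fun t => \sum_(0 <= s < t.+1) F s * G (t - s)%N.

Lemma cmulC F G : cmul F G = cmul G F.
Proof.
apply: functional_extensionality => t; rewrite /cmul big_nat_rev /=.
apply: eq_big_nat => s /andP[_ hs]; rewrite add0n subSS mulrC subKn //.
Qed.

Lemma cmulA F G H : cmul (cmul F G) H = cmul F (cmul G H).
Proof.
apply: functional_extensionality => t; rewrite /cmul.
transitivity (\sum_(0 <= a < t.+1) \sum_(0 <= x < t.+1 | (x < a.+1)%N)
                F x * G (a - x)%N * H (t - a)%N).
  apply: eq_big_nat => a /andP[_ ha]; rewrite mulr_suml.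
  by rewrite (big_nat_widen 0 _ t.+1).
rewrite (exchange_big_dep_nat predT) //=.
apply: eq_big_nat => x /andP[_ hx]; rewrite mulr_sumr.
rewrite -(big_nat_widenl _ _ _ (fun i => true)) //.
have -> : x = (0 + x)%N by [].
rewrite big_addn add0n.
have -> : (t.+1 - x = (t - x).+1)%N by rewrite subSn.
apply: eq_big_nat => b /andP[_ hb]; rewrite addnK mulrA.
by rewrite addnC subnDA.
Qed.

Lemma cmulDr F G1 G2 : cmul F (fun t => G1 t + G2 t) = fun t => cmul F G1 t + cmul F G2 t.
Proof.
apply: functional_extensionality => t; rewrite /cmul -big_split /=.
by apply: eq_bigr => s _; rewrite mulrDr.
Qed.

Lemma cmulNr F G : cmul F (fun t => - G t) = fun t => - cmul F G t.
Proof.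
apply: functional_extensionality => t; rewrite /cmul -sumrN.
by apply: eq_bigr => s _; rewrite mulrN.
Qed.

Lemma cmul_sumr F M (c : nat -> A) (G : nat -> nat -> A) :
  cmul F (fun t => \sum_(m < M) c m * G m t) = fun t => \sum_(m < M) c m * cmul F (G m) t.
Proof.
apply: functional_extensionality => t; rewrite /cmul.
under eq_bigr do rewrite mulr_sumr.
rewrite exchange_big /=; apply: eq_bigr => m _; rewrite mulr_sumr.
by apply: eq_bigr => s _; rewrite mulrCA.
Qed.

Definition sh (d : nat) F : nat -> A := fun t => if (d <= t)%N then F (t - d)%N else 0.

Lemma cmul_shl d F G : cmul (sh d F) G = sh d (cmul F G).
Proof.
apply: functional_extensionality => t; rewrite /cmul /sh.
case: leqP => hdt; last first.
  rewrite big1_seq // => s /andP[_]; rewrite mem_index_iota => /andP[_ hs].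
  by rewrite ifN ?mul0r // -ltnNge (leq_ltn_trans _ hdt).
rewrite (big_cat_nat _ (n := d)) //= ?(leq_trans hdt) //.
rewrite big1_seq ?add0r; last first.
  by move=> s /andP[_]; rewrite mem_index_iota => /andP[_ hs]; rewrite ifN ?mul0r // -ltnNge.
have -> : d = (0 + d)%N by [].
rewrite big_addn add0n.
have -> : (t.+1 - d = (t - d).+1)%N by rewrite subSn.
apply: eq_big_nat => s /andP[_ hs]; rewrite leq_addl addnK.
by rewrite addnC subnDA.
Qed.

End Ser.

Section Laur.
Variable A : comPzRingType.
Implicit Types (f g : int -> A) (F G : nat -> A).

Definition to_ps (N : nat) f : nat -> A := fun t => f (N%:Z - t%:Z).
Definition of_ps (N : nat) F : int -> A :=
  fun n => if (n <= N%:Z) then F (absz (N%:Z - n)) else 0.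
Definition lmul (N M : nat) f g : int -> A :=
  of_ps (N + M) (cmul (to_ps N f) (to_ps M g)).
Definition supp (N : nat) f := forall n : int, N%:Z < n -> f n = 0.

Lemma to_of N F : to_ps N (of_ps N F) = F.
Proof.
apply: functional_extensionality => t; rewrite /to_ps /of_ps.
have -> : (N%:Z - t%:Z <= N%:Z) = true by apply/idP; lia.
by have -> : (N%:Z - (N%:Z - t%:Z)) = t%:Z by ring.
Qed.

Lemma of_to N f : supp N f -> of_ps N (to_ps N f) = f.
Proof.
move=> sf; apply: functional_extensionality => n; rewrite /to_ps /of_ps.
case: ifP => hn; last by rewrite sf //; lia.
rewrite gez0_abs; last by lia.
by have -> : (N%:Z - (N%:Z - n)) = n by ring.
Qed.

Lemma supp_of N F : supp N (of_ps N F).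
Proof. by move=> n hn; rewrite /of_ps ifF //; apply/negbTE; lia. Qed.

Lemma supp_lmul N M f g : supp (N + M) (lmul N M f g).
Proof. exact: supp_of. Qed.

Lemma lmulA N M K f g h :
  lmul (N + M) K (lmul N M f g) h = lmul N (M + K) f (lmul M K g h).
Proof. by rewrite /lmul !to_of cmulA addnA. Qed.

Lemma lmulC N M f g : lmul N M f g = lmul M N g f.
Proof. by rewrite /lmul cmulC addnC. Qed.

Lemma of_psD N F G : of_ps N (fun t => F t + G t) = fun n => of_ps N F n + of_ps N G n.
Proof. by apply: functional_extensionality => n; rewrite /of_ps; case: ifP; rewrite ?addr0. Qed.

Lemma of_psN N F : of_ps N (fun t => - F t) = fun n => - of_ps N F n.
Proof. by apply: functional_extensionality => n; rewrite /of_ps; case: ifP; rewrite ?oppr0. Qed.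

Lemma of_ps_sum N M (c : nat -> A) (G : nat -> nat -> A) :
  of_ps N (fun t => \sum_(m < M) c m * G m t) =
  fun n => \sum_(m < M) c m * of_ps N (G m) n.
Proof.
apply: functional_extensionality => n; rewrite /of_ps; case: ifP => // _.
by rewrite big1 // => m _; rewrite mulr0.
Qed.

Lemma lmulDr N M f g1 g2 :
  lmul N M f (fun n => g1 n + g2 n) = fun n => lmul N M f g1 n + lmul N M f g2 n.
Proof.
rewrite /lmul; have -> : to_ps M (fun n => g1 n + g2 n) =
  (fun t => to_ps M g1 t + to_ps M g2 t) by [].
by rewrite cmulDr of_psD.
Qed.

Lemma lmulNr N M f g : lmul N M f (fun n => - g n) = fun n => - lmul N M f g n.
Proof.
rewrite /lmul; have -> : to_ps M (fun n => - g n) = (fun t => - to_ps M g t) by [].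
by rewrite cmulNr of_psN.
Qed.

Lemma lmulBr N M f g1 g2 :
  lmul N M f (fun n => g1 n - g2 n) = fun n => lmul N M f g1 n - lmul N M f g2 n.
Proof.
rewrite (lmulDr N M f g1 (fun n => - g2 n)) lmulNr.
by [].
Qed.

Lemma lmulNl N M f g : lmul N M (fun n => - f n) g = fun n => - lmul N M f g n.
Proof. by rewrite lmulC lmulNr lmulC. Qed.

Lemma lmul_sumr N M K (c : nat -> A) f (g : nat -> int -> A) :
  lmul N M f (fun n => \sum_(m < K) c m * g m n) =
  fun n => \sum_(m < K) c m * lmul N M f (g m) n.
Proof.
rewrite /lmul; have -> : to_ps M (fun n => \sum_(m < K) c m * g m n) =
  (fun t => \sum_(m < K) c m * to_ps M (g m) t) by [].
by rewrite (cmul_sumr _ _ c (fun m => to_ps M (g m))) (of_ps_sum _ _ c (fun m => cmul (to_ps N f) (to_ps M (g m)))).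
Qed.

Lemma to_ps_sh N N' f : supp N' f -> (N' <= N)%N ->
  to_ps N f = sh (N - N') (to_ps N' f).
Proof.
move=> sf hN; apply: functional_extensionality => t; rewrite /to_ps /sh.
case: leqP => ht.
  congr f; lia.
by rewrite sf //; rewrite -(subnK hN) in ht *; lia.
Qed.

Lemma of_ps_sh N N' F : (N' <= N)%N -> of_ps N (sh (N - N') F) = of_ps N' F.
Proof.
move=> hN; apply: functional_extensionality => n; rewrite /of_ps /sh.
case: (boolP (n <= N'%:Z)) => h1; last first.
  case: ifP => // h2; rewrite ifF //; apply/negbTE; lia.
rewrite ifT; last by lia.
rewrite ifT; last by lia.
congr F; lia.
Qed.

Lemma lmul_boundl N N' M f g : supp N' f -> (N' <= N)%N ->
  lmul N M f g = lmul N' M f g.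
Proof.
move=> sf hN; rewrite /lmul (to_ps_sh sf hN) cmul_shl.
by rewrite -(subnDr M N N') of_ps_sh // leq_add2r.
Qed.

Lemma lmul_boundr N M M' f g : supp M' g -> (M' <= M)%N ->
  lmul N M f g = lmul N M' f g.
Proof. by move=> sg hM; rewrite lmulC (lmul_boundl _ _ sg hM) lmulC. Qed.

End Laur.

Section HQ.
Variable A : comPzRingType.
Variable v : nat -> nat -> A.
Implicit Types (f g : int -> A) (F G : nat -> A).

Definition Hf (a : nat) : int -> A := fun n => ceval v (coefL a n).
Definition hv (a x : nat) : A := ceval v (Hcoord a x).
Definition Q (N : nat) f : int -> A :=
  fun n => f n - \sum_(0 <= m < N.+1) f m%:Z * Hf m n.

Lemma ceval0 : ceval v ezero = 0. Proof. by []. Qed.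
Lemma ceval1 : ceval v eone = 1. Proof. by rewrite /= mulr1z. Qed.

Lemma Hf_eq a n : Hf a n =
  if n == a%:Z then 1 else if n < 0 then hv a (absz n) else 0.
Proof. by rewrite /Hf /coefL; case: ifP => _; rewrite ?ceval1 //; case: ifP. Qed.

Lemma hv0 x : hv 0 x = 0. Proof. by []. Qed.

Lemma supp_H a : supp a (Hf a).
Proof. move=> n hn; rewrite Hf_eq ifF; last by apply/negbTE; lia.
by rewrite ifF //; apply/negbTE; lia. Qed.

Lemma H_nonneg a n : 0 <= n -> Hf a n = if n == a%:Z then 1 else 0.
Proof. by move=> hn; rewrite Hf_eq; case: ifP => // _; rewrite ifF //; apply/negbTE; lia. Qed.

Lemma to_ps_H a s : to_ps a (Hf a) s =
  if s == 0%N then 1 else if (a < s)%N then hv a (s - a) else 0.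
Proof.
rewrite /to_ps Hf_eq.
case: (eqVneq s 0%N) => [->|hs]; first by rewrite subr0 eqxx.
rewrite ifF; last by apply/negbTE; lia.
case: ifP => h1.
  rewrite ifT; last by lia.
  congr hv; lia.
by rewrite ifF //; apply/negbTE; lia.
Qed.

Lemma sum_delta0 t (c : nat -> A) :
  \sum_(0 <= s < t.+1) (if (t - s)%N == 0%N then 1 else 0) * c s = c t.
Proof.
rewrite big_nat_recr //= subnn eqxx mul1r big1_seq ?add0r // => s.
rewrite mem_index_iota => /andP[_ /andP[_ hs]]; rewrite ifF ?mul0r //.
by apply/negbTE; lia.
Qed.

Lemma lmul_unit N f : supp N f -> lmul N 0 f (Hf 0) = f.
Proof.
move=> sf; rewrite /lmul addn0 -{2}(of_to sf); congr of_ps.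
apply: functional_extensionality => t; rewrite /cmul.
rewrite -[RHS](sum_delta0 t (to_ps N f)).
apply: eq_bigr => s _; rewrite mulrC to_ps_H; case: ifP => //.
by case: ifP.
Qed.

Lemma Q_nonneg N f n : supp N f -> 0 <= n -> Q N f n = 0.
Proof.
move=> sf hn; rewrite /Q.
under eq_bigr do rewrite H_nonneg //.
case: (boolP (n <= N%:Z)) => hnN.
  have [k hk] : exists k : nat, n = k%:Z by exists (absz n); rewrite gez0_abs.
  subst n.
  rewrite (big_cat_nat _ (n := k)) //=; last by lia.
  rewrite big1_seq ?add0r; last first.
    move=> s; rewrite mem_index_iota => /andP[_ /andP[_ hs]].
    by rewrite ifF ?mulr0 //; apply/negbTE; lia.
  rewrite big_ltn; last by lia.
  rewrite eqxx mulr1 big1_seq ?addr0 ?subrr // => s.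
  rewrite mem_index_iota => /andP[_ /andP[hs _]].
  by rewrite ifF ?mulr0 //; apply/negbTE; lia.
rewrite sf; last by lia.
rewrite big1_seq ?subrr // => s; rewrite mem_index_iota => /andP[_ /andP[_ hs]].
by rewrite ifF ?mulr0 //; apply/negbTE; lia.
Qed.

Lemma supp_Q N f : supp N f -> supp 0 (Q N f).
Proof. by move=> sf n hn; apply: Q_nonneg => //; lia. Qed.

Lemma Q_bound N N' f : supp N' f -> (N' <= N)%N -> Q N f = Q N' f.
Proof.
move=> sf hN; apply: functional_extensionality => n; rewrite /Q.
rewrite (big_cat_nat _ (n := N'.+1)) //=.
rewrite [\sum_(N'.+1 <= i < N.+1) _]big1_seq ?addr0 // => s.
rewrite mem_index_iota => /andP[_ /andP[hs _]].
by rewrite sf ?mul0r //; lia.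
Qed.

Lemma Q_add N f g : Q N (fun n => f n + g n) = fun n => Q N f n + Q N g n.
Proof.
apply: functional_extensionality => n; rewrite /Q.
under eq_bigr do rewrite mulrDl.
rewrite big_split /=; ring.
Qed.

Lemma Q_opp N f : Q N (fun n => - f n) = fun n => - Q N f n.
Proof.
apply: functional_extensionality => n; rewrite /Q.
under eq_bigr do rewrite mulNr.
rewrite sumrN; ring.
Qed.

Lemma Q_sub N f g : Q N (fun n => f n - g n) = fun n => Q N f n - Q N g n.
Proof. by rewrite (Q_add N f (fun n => - g n)) Q_opp. Qed.

Lemma Q_sum N K (c : nat -> A) (g : nat -> int -> A) :
  Q N (fun n => \sum_(m < K) c m * g m n) = fun n => \sum_(m < K) c m * Q N (g m) n.
Proof.
apply: functional_extensionality => n; rewrite /Q.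
under [\sum_(0 <= s < N.+1) _]eq_bigr do rewrite mulr_suml.
rewrite exchange_big /= -sumrB; apply: eq_bigr => m _.
rewrite mulrBr mulr_sumr; congr (_ - _); apply: eq_bigr => s _; ring.
Qed.

Lemma Q_H N : Q N (Hf N) = fun _ => 0.
Proof.
apply: functional_extensionality => n; rewrite /Q.
rewrite big_nat_recr //= big1_seq ?add0r.
  by rewrite (@H_nonneg N N%:Z) // eqxx mul1r subrr.
move=> s; rewrite mem_index_iota => /andP[_ /andP[_ hs]].
by rewrite H_nonneg ?ifF ?mul0r //; apply/negbTE; lia.
Qed.

End HQ.

Section G1.
Variable A : comPzRingType.
Variable v : nat -> nat -> A.

Lemma ceval_esum s : ceval v (esum s) = \sum_(x <- s) ceval v x.
Proof. by elim: s => [|x s IH]; rewrite ?big_nil ?big_cons //= IH. Qed.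

Lemma cmulHH a b t : (t <= a + b)%N ->
  cmul (to_ps a (Hf v a)) (to_ps b (Hf v b)) t =
  (if t == 0%N then 1 else if (b < t)%N then hv v b (t - b) else 0) +
  (if (a < t)%N then hv v a (t - a) else 0).
Proof.
move=> htab; rewrite /cmul big_nat_recl // to_ps_H eqxx mul1r subn0 to_ps_H.
congr (_ + _).
case: t htab => [|t] htab.
  by rewrite big_geq.
rewrite big_nat_recr //= subnn (to_ps_H v b 0) eqxx mulr1 (to_ps_H v a t.+1) /=.
rewrite big1_seq ?add0r // => s; rewrite mem_index_iota => /andP[_ hs].
rewrite !to_ps_H /=.
case: ifP => h1; last by rewrite mul0r.
case: ifP => h2; first by lia.
case: ifP => h3; last by rewrite mulr0.
lia.
Qed.

Lemma G1 a b (n : int) : n < 0 ->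
  ceval v (cs_rhs a b n) = - Q v (a + b) (lmul (a) (b) (Hf v a) (Hf v b)) n.
Proof.
move=> hn.
set T := absz (a%:Z + b%:Z - n)%R.
have hT : T%:Z = a%:Z + b%:Z - n by rewrite /T gez0_abs //; lia.
have Fn : lmul a b (Hf v a) (Hf v b) n = ceval v (prodcoef a b n).
  rewrite /lmul /of_ps ifT; last by lia.
  rewrite /prodcoef ifT; last by lia.
  rewrite ceval_esum big_map.
  have -> : absz ((a + b)%N%:Z - n) = T by rewrite /T PoszD.
  rewrite /cmul /index_iota subn0; apply: eq_big_seq => s.
  rewrite mem_iota => /andP[_ hs] /=.
  rewrite /to_ps /Hf; congr (_ * ceval v (coefL b _)); lia.
have Fm : forall m : nat, (m <= a + b)%N ->
    lmul a b (Hf v a) (Hf v b) m%:Z = cmul (to_ps a (Hf v a)) (to_ps b (Hf v b)) (a + b - m)%N.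
  move=> m hm; rewrite /lmul /of_ps ifT; last by lia.
  congr cmul; lia.
rewrite /Q /cs_rhs /esum /= -/esum !ceval_esum !big_map Fn.
rewrite (eq_big_nat _ _ (F2 := fun m => cmul (to_ps a (Hf v a)) (to_ps b (Hf v b)) (a + b - m)%N * Hf v m n)); last first.
  by move=> m /andP[_ hm]; rewrite Fm.
rewrite big_nat_rev /= add0n.
rewrite (eq_big_nat _ _ (F2 := fun m =>
   (if m == 0%N then 1 else 0) * Hf v (a + b - m) n +
   (if (b < m)%N then hv v b (m - b) else 0) * Hf v (a + b - m) n +
   (if (a < m)%N then hv v a (m - a) else 0) * Hf v (a + b - m) n)); last first.
  move=> m /andP[_ hm]; rewrite subSS subKn // cmulHH //.
  case: m hm => [|m'] hm; rewrite ?ltn0 /=; ring.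
rewrite !big_split /=.
have S0 : \sum_(0 <= i < (a + b).+1) (if i == 0%N then 1 else 0) * Hf v (a + b - i) n
    = Hf v (a + b) n.
  rewrite big_nat_recl // eqxx mul1r subn0 big1_seq ?addr0 // => s _.
  by rewrite mul0r.
have S1 : forall c d, \sum_(0 <= i < (c + d).+1) (if (d < i)%N then hv v d (i - d) else 0) * Hf v (c + d - i) n
    = \sum_(i <- iota 1 c) hv v d i * Hf v (c - i) n.
  move=> c d.
  rewrite (big_cat_nat _ (n := d.+1)) //=; last by lia.
  rewrite big1_seq ?add0r; last first.
    move=> s; rewrite mem_index_iota => /andP[_ /andP[_ hs]].
    by rewrite ifF ?mul0r //; apply/negbTE; lia.
  have -> : d.+1 = (1 + d)%N by [].
  rewrite big_addn.
  have -> : ((c + d).+1 - d = c.+1)%N by lia.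
  rewrite /index_iota subn1 /=; apply: eq_big_seq => s.
  rewrite mem_iota => /andP[h1 h2]; rewrite ifT; last by lia.
  by rewrite addnK; congr (_ * Hf v _ n); lia.
rewrite S0 S1 (addnC a b) S1 addnC.
rewrite /hv /Hf mulrN1z mulr0z; ring.
Qed.

End G1.

Section DualLemmas.
Variable R : comPzRingType.

Lemma dual_addE (x y : dual R) : x + y = (x.1 + y.1, x.2 + y.2). Proof. by []. Qed.
Lemma dual_oppE (x : dual R) : - x = (- x.1, - x.2). Proof. by []. Qed.

Lemma dual_intr (c : int) : (c%:~R : dual R) = (c%:~R, 0).
Proof.
have H1 : forall n : nat, ((1 : dual R) *+ n) = (1 *+ n, 0).
  elim=> [|n IH] //; rewrite !mulrS IH dual_addE /=; congr pair.
  by rewrite /= addr0.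
case: c => n; first by rewrite /intmul H1.
by rewrite NegzE mulrNz !dual_oppE /= -!/(intmul _ _) /intmul H1 /= oppr0.
Qed.

Lemma fst_sum I (r : seq I) (P : pred I) (F : I -> dual R) :
  (\sum_(i <- r | P i) F i).1 = \sum_(i <- r | P i) (F i).1.
Proof. by apply: (big_morph fst (id1 := 0) (op1 := +%R)). Qed.

Lemma snd_sum I (r : seq I) (P : pred I) (F : I -> dual R) :
  (\sum_(i <- r | P i) F i).2 = \sum_(i <- r | P i) (F i).2.
Proof. by apply: (big_morph snd (id1 := 0) (op1 := +%R)). Qed.

Definition p1 (f : int -> dual R) : int -> R := fun n => (f n).1.
Definition p2 (f : int -> dual R) : int -> R := fun n => (f n).2.

Lemma lmul_p1 N M (f g : int -> dual R) n : (lmul N M f g n).1 = lmul N M (p1 f) (p1 g) n.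
Proof.
rewrite /lmul /of_ps; case: ifP => // _.
by rewrite /cmul fst_sum.
Qed.

Lemma lmul_p2 N M (f g : int -> dual R) n :
  (lmul N M f g n).2 = lmul N M (p2 f) (p1 g) n + lmul N M (p1 f) (p2 g) n.
Proof.
rewrite /lmul /of_ps; case: ifP => _; last by rewrite addr0.
rewrite /cmul snd_sum -big_split /=; apply: eq_bigr => s _.
exact: addrC.
Qed.

End DualLemmas.

Lemma ceval_dual (R : comPzRingType) (h : nat -> nat -> R) V p :
  ceval (fun a m => ((h a m, ceval h (V a m)) : dual R)) p = (ceval h p, ceval h (cderiv V p)).
Proof.
elim: p => [a m|c|p IHp q IHq|p IHp q IHq] //=.
- by rewrite dual_intr.
- by rewrite IHp IHq.
- by rewrite IHp IHq dual_mulE /= addrC.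
Qed.

Section Main.
Variables (R : comPzRingType) (h : nat -> nat -> R).

Definition Ef (j k i : nat) (n : int) : R :=
  Q h i (lmul 0 i (Q h (j + k) (lmul j k (Hf h j) (Hf h k))) (Hf h i)) n
  + Q h k (lmul k 0 (Hf h k) (Q h (j + i) (lmul j i (Hf h j) (Hf h i)))) n
  + Q h j (lmul j 0 (Hf h j) (Q h (k + i) (lmul k i (Hf h k) (Hf h i)))) n
  - Q h (j + k + i) (lmul j (k + i) (Hf h j) (lmul k i (Hf h k) (Hf h i))) n.

Lemma Ef_sym j k i n : Ef j k i n = Ef k j i n.
Proof.
rewrite /Ef.
have -> : lmul j (k + i) (Hf h j) (lmul k i (Hf h k) (Hf h i)) =
          lmul k (j + i) (Hf h k) (lmul j i (Hf h j) (Hf h i)).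
  rewrite -lmulA (lmulC j k) addnC lmulA //.
rewrite (lmulC j k) (addnC j k); ring.
Qed.

Variable j : nat.
Let V := Xfield j.
Let dv := fun a m => ((h a m, ceval h (V a m)) : dual R).
Let dl (a : nat) : int -> R := fun n => ceval h (cderiv V (coefL a n)).

Lemma Hf_dv a n : Hf dv a n = (Hf h a n, dl a n).
Proof. by rewrite /Hf ceval_dual. Qed.

Lemma delta_eq a : dl a = fun n => - Q h (j + a) (lmul j a (Hf h j) (Hf h a)) n.
Proof.
apply: functional_extensionality => n; rewrite /dl /coefL.
case: (boolP (n < 0)) => hn.
  rewrite ifF; last by apply/negbTE; lia.
  rewrite /Hcoord; case: (eqVneq a 0%N) => [->|ha].
    rewrite addn0 lmul_unit; last exact: supp_H.
    by rewrite Q_H oppr0.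
  have -> : cderiv V (EVar a (absz n)) = cs_rhs j a n.
    by rewrite /= /V /Xfield /Xcomp ltz0_abs ?opprK.
  exact: G1.
have -> : Q h (j + a) (lmul j a (Hf h j) (Hf h a)) n = 0.
  by apply: Q_nonneg; [exact: supp_lmul | lia].
by rewrite oppr0; case: ifP.
Qed.

Lemma Qdual N (f : int -> dual R) n :
  (Q dv N f n).2 = Q h N (p2 f) n - \sum_(0 <= m < N.+1) (f m).1 * dl m n.
Proof.
rewrite /Q /= snd_sum.
rewrite (eq_bigr (fun m : nat => (f m%:Z).1 * dl m n + (f m%:Z).2 * Hf h m n)); last first.
  by move=> m _; rewrite Hf_dv.
rewrite big_split /= /p2; ring.
Qed.

Lemma p1_Hdv a : p1 (Hf dv a) = Hf h a.
Proof. by apply: functional_extensionality => n; rewrite /p1 Hf_dv. Qed.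
Lemma p2_Hdv a : p2 (Hf dv a) = dl a.
Proof. by apply: functional_extensionality => n; rewrite /p2 Hf_dv. Qed.

Lemma main_eq k i l : (0 < l)%N ->
  ceval h (cderiv V (Xcomp k i l)) = Ef j k i (- l%:Z).
Proof.
move=> hl; set n := - l%:Z.
have hn : n < 0 by rewrite /n; lia.
have -> : ceval h (cderiv V (Xcomp k i l)) = (ceval dv (Xcomp k i l)).2.
  by rewrite /dv ceval_dual.
rewrite /Xcomp -/n (G1 dv k i hn).
have oppE2 : forall x : dual R, (- x).2 = - x.2 by [].
rewrite oppE2 Qdual.
have -> : p2 (lmul k i (Hf dv k) (Hf dv i)) =
   fun n => lmul k i (dl k) (Hf h i) n + lmul k i (Hf h k) (dl i) n.
  apply: functional_extensionality => m; by rewrite /p2 lmul_p2 !p1_Hdv !p2_Hdv.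
rewrite (eq_bigr (fun m : nat => lmul k i (Hf h k) (Hf h i) m%:Z * dl m n)); last first.
  by move=> m _; rewrite lmul_p1 !p1_Hdv.
set Hj := Hf h j; set Hk := Hf h k; set Hi := Hf h i.
set Gk := Q h (j + k) (lmul j k Hj Hk).
set Gi := Q h (j + i) (lmul j i Hj Hi).
set F0 := lmul k i Hk Hi.
have sGk : supp 0 Gk by apply: supp_Q; apply: supp_lmul.
have sGi : supp 0 Gi by apply: supp_Q; apply: supp_lmul.
have T1eq : Q h (k + i) (fun n0 => lmul k i (dl k) Hi n0 + lmul k i Hk (dl i) n0) n
    = - (Q h i (lmul 0 i Gk Hi) n + Q h k (lmul k 0 Hk Gi) n).
  rewrite (delta_eq k) (delta_eq i) -/Hj -/Hk -/Hi -/Gk -/Gi.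
  rewrite lmulNl lmulNr.
  rewrite (Q_add _ (k + i) (fun n0 => - lmul k i Gk Hi n0) (fun n0 => - lmul k i Hk Gi n0)).
  rewrite !Q_opp.
  rewrite (lmul_boundl _ _ sGk) // (lmul_boundr _ _ sGi) //.
  rewrite (@Q_bound _ h (k + i) i (lmul 0 i Gk Hi)); [| exact: (@supp_lmul _ 0 i Gk Hi) | exact: leq_addl].
  rewrite (@Q_bound _ h (k + i) k (lmul k 0 Hk Gi)); [ring | | exact: leq_addr].
  by have HH := @supp_lmul _ k 0 Hk Gi; rewrite addn0 in HH.
have Seq : \sum_(0 <= m < (k + i).+1) F0 m%:Z * dl m n =
    Q h j (lmul j 0 Hj (Q h (k + i) F0)) n - Q h (j + k + i) (lmul j (k + i) Hj F0) n.
  rewrite (eq_big_nat _ _ (F2 := fun m : nat =>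
      - (F0 m%:Z * Q h (j + k + i) (lmul j (k + i) Hj (Hf h m)) n))); last first.
    move=> m /andP[_ hm]; rewrite (delta_eq m) mulrN; congr (- (_ * _)).
    rewrite (@lmul_boundr _ j (k + i) m Hj (Hf h m) (@supp_H _ h m)); last by lia.
    rewrite (@Q_bound _ h (j + k + i) (j + m)) //; last by lia.
    exact: supp_lmul.
  rewrite sumrN big_mkord.
  have E := equal_f (Q_sum h (j + k + i) (k + i).+1 (fun m => F0 m%:Z) (fun m => lmul j (k + i) Hj (Hf h m))) n.
  rewrite /= in E; rewrite -E.
  rewrite -(lmul_sumr j (k + i) (k + i).+1 (fun m => F0 m%:Z) Hj (Hf h)).
  have -> : (fun n0 => \sum_(m < (k + i).+1) F0 m%:Z * Hf h m n0) =
            (fun n0 => F0 n0 - Q h (k + i) F0 n0).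
    apply: functional_extensionality => n0; rewrite /Q big_mkord; ring.
  rewrite lmulBr Q_sub.
  rewrite (@lmul_boundr _ j (k + i) 0 Hj _ (@supp_Q _ h _ _ (@supp_lmul _ k i Hk Hi))) //.
  rewrite (@Q_bound _ h (j + k + i) j (lmul j 0 Hj (Q h (k + i) F0))); [ring | | lia].
  by have HH := @supp_lmul _ j 0 Hj (Q h (k + i) F0); rewrite addn0 in HH.
rewrite T1eq Seq /Ef; ring.
Qed.

End Main.

Local Close Scope ring_scope.

Theorem mainTheorem4 (R : comPzRingType) (h : nat -> nat -> R) (j k i l : nat) :
  (0 < j)%N -> (0 < k)%N -> (0 < l)%N ->
  ceval h (cderiv (Xfield j) (Xcomp k i l)) =
  ceval h (cderiv (Xfield k) (Xcomp j i l)).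
Proof.
move=> _ _ hl.
by rewrite (main_eq h j k i hl) (main_eq h k j i hl) Ef_sym.
Qed.
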